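(* Let $n\ge 2$ and let $c=s_{n-1}s_{n-2}\cdots s_2s_1\in S_n$. For every $v\in S_n$ with $v\le c$ in the Bruhat order, one has $\mathcal I_v=\operatorname{in}_{\mathbf w}(\mathcal I_v)$.
   Context: Notation: $[a,b]=\{a,a+1,\dots,b\}$, $[b]=[1,b]$. $S_n$ is the symmetric group with simple reflections $s_i=(i,i+1)$ and Bruhat order $\le$. For $v\in S_n$ and $k\in[n]$ put $v([k])=\{v(1),\dots,v(k)\}$. For $k$-element subsets $I=\{a_1<\dots<a_k\}$, $K=\{b_1<\dots<b_k\}$ of $[n]$ write $I\le K$ iff $a_r\le b_r$ for all $r$. Let $A_n=\mathbb C[p_I : I\subseteq[n],\,1\le |I|\le n-1]$ (Plücker coordinates). For a sequence $I=(i_1,\dots,i_k)$ of pairwise distinct elements of $[n]$ set $p_I=\mathrm{sgn}(\sigma)\,p_{\{i_1,\dots,i_k\}}$, where $\sigma$ is the permutation sorting the sequence increasingly; if a sequence has repeated entries, $p_I=0$. Plücker relations: for sequences $J=(j_1,\dots,j_e)$, $L=(l_1,\dots,l_d)$ of distinct elements of $[n]$ with $1\le e\le d\le n-1$ and $k\in[e]$, $R^k_{J,L}=p_Jp_L-\sum_{1\le r_1<\dots<r_k\le d}p_{J'}p_{L'}$, where $J'$ is obtained from $J$ by replacing $j_t$ by $l_{r_t}$ ($t=1,\dots,k$) and $L'$ is obtained from $L$ by replacing $l_{r_t}$ by $j_t$. $\mathcal I_{\mathrm{Fl}_n}$ is the ideal generated by all $R^k_{J,L}$ (the ideal of the flag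 variety $\mathrm{Fl}_n$ in $\prod_{k=1}^{n-1}\mathbb P(\wedge^k\mathbb C^n)$), and for $v\in S_n$, $\mathcal I_v=\mathcal I_{\mathrm{Fl}_n}+(p_I : I\not\le v([|I|]))$ is the ideal of the Schubert variety $X_v=\overline{BvB/B}$. Weight vector: $\mathbf w_I=\#\{a\in I: |I|\le a\le n-1\}$; the weight of a monomial $\prod p_I^{\alpha_I}$ is $\sum\alpha_I\mathbf w_I$; for $f\in A_n$, $\operatorname{in}_{\mathbf w}(f)$ is the sum of the terms of $f$ of minimal weight, and for an ideal $\mathcal I$, $\operatorname{in}_{\mathbf w}(\mathcal I)$ is the ideal generated by all $\operatorname{in}_{\mathbf w}(f)$, $f\in\mathcal I$. *)

(* Defs.v *)
From mathcomp Require Import all_boot all_order all_algebra all_fingroup.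
From mathcomp Require Import Rstruct complex.
From mathcomp Require Import mpoly.
From Stdlib Require Import Relation_Operators.

Set Implicit Arguments.
Unset Strict Implicit.
Unset Printing Implicit Defensive.

Import GRing.Theory.
Local Open Scope ring_scope.

Definition CC : fieldType := complex Rdefinitions.R.

(* Elements of [n] = {1,...,n} are represented by 'I_n = {0,...,n-1}:
   the ordinal a stands for the integer a+1. *)

Definition PI (n : nat) := {I : {set 'I_n} | (0 < #|I|)%N && (#|I| < n)%N}.

Definition nvar (n : nat) : nat := #|{: PI n}|.

(* A_n = C[p_I : I subset of [n], 1 <= |I| <= n-1];  p_I = 'X_(enum_rank I) *)
Definition An (n : nat) := {mpoly CC[nvar n]}.

Definition pvar (n : nat) (I : PI n) : An n := 'X_(enum_rank I).

(* p_I for a set I (zero if I is not of admissible size; never used then) *)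
Definition pset (n : nat) (I : {set 'I_n}) : An n :=
  if insub I is Some x then pvar x else 0.

Definition ninv (s : seq nat) : nat :=
  #|[set p : 'I_(size s) * 'I_(size s) |
      (p.1 < p.2)%N && (nth 0%N s p.2 < nth 0%N s p.1)%N]|.

(* p_J for a sequence J (elements of [n] coded as naturals < n):
   sgn(sorting permutation) * p_{set of J}, and 0 if J has repetitions.
   sgn of the sorting permutation = (-1)^(number of inversions). *)
Definition pseq (n : nat) (J : seq nat) : An n :=
  if uniq J && all (fun a => a < n)%N J
  then (-1) ^+ ninv J * pset [set a : 'I_n | val a \in J]
  else 0.

(* Pluecker relation R^k_{J,L}; positions are 0-indexed here.
   The increasing tuples 1 <= r_1 < ... < r_k <= d are the k-subsets R of
   'I_d listed increasingly (rs); J' replaces j_t by l_{r_t} (t = 1..k), and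
   L' replaces l_{r_t} by j_t. *)
Definition Jprime (k : nat) (J L : seq nat) (rs : seq nat) : seq nat :=
  [seq (if (t < k)%N then nth 0%N L (nth 0%N rs t) else nth 0%N J t)
  | t <- iota 0 (size J)].

Definition Lprime (J L : seq nat) (rs : seq nat) : seq nat :=
  [seq (if s \in rs then nth 0%N J (index s rs) else nth 0%N L s)
  | s <- iota 0 (size L)].

Definition incr_list (d : nat) (R : {set 'I_d}) : seq nat :=
  sort leq [seq val r | r in R].

Definition plucker_rel (n k : nat) (J L : seq nat) : An n :=
  pseq n J * pseq n L -
  \sum_(R : {set 'I_(size L)} | #|R| == k)
     pseq n (Jprime k J L (incr_list R)) * pseq n (Lprime J L (incr_list R)).

Definition is_plucker_gen (n : nat) (f : An n) : Prop :=
  exists (J L : seq nat) (k : nat),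
    [/\ uniq J, uniq L, all (fun a => a < n)%N J, all (fun a => a < n)%N L &
    [/\ (1 <= size J)%N, (size J <= size L)%N, (size L <= n.-1)%N,
        (1 <= k <= size J)%N & f = plucker_rel n k J L]].

Definition ideal_gen (R : comNzRingType) (S : R -> Prop) (f : R) : Prop :=
  exists gs cs : seq R,
    [/\ size cs = size gs, (forall g, g \in gs -> S g) &
        f = \sum_(i < size gs) cs`_i * gs`_i].

Definition gale_le (n : nat) (I K : {set 'I_n}) : bool :=
  (#|I| == #|K|) &&
  all2 leq (sort leq [seq val a | a in I]) (sort leq [seq val a | a in K]).

Definition vfirst (n : nat) (v : 'S_n) (k : nat) : {set 'I_n} :=
  [set v i | i : 'I_n & (i < k)%N].

Definition schubert_gen (n : nat) (v : 'S_n) (f : An n) : Prop :=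
  is_plucker_gen f \/
  exists I : PI n, ~~ gale_le (val I) (vfirst v #|val I|) /\ f = pvar I.

Definition schubert_ideal (n : nat) (v : 'S_n) : An n -> Prop :=
  ideal_gen (@schubert_gen n v).

Definition wI (n : nat) (I : PI n) : nat :=
  #|[set a in val I | (#|val I| <= (val a).+1 <= n.-1)%N]|.

Definition mweight (n : nat) (m : 'X_{1..nvar n}) : nat :=
  (\sum_(i < nvar n) m i * wI (enum_val i))%N.

Definition in_w (n : nat) (f : An n) : An n :=
  \sum_(m <- msupp f | all (fun m' => mweight m <= mweight m')%N (msupp f))
     f@_m *: 'X_[m].

Definition initial_ideal (n : nat) (I : An n -> Prop) : An n -> Prop :=
  ideal_gen (fun g => exists f, I f /\ g = in_w f).

Definition perm_length (n : nat) (u : 'S_n) : nat :=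
  #|[set p : 'I_n * 'I_n | (p.1 < p.2)%N && (u p.2 < u p.1)%N]|.

Definition bruhat_step (n : nat) (u w : 'S_n) : Prop :=
  exists i j : 'I_n, i != j /\ w = (u * tperm i j)%g /\
                     (perm_length u < perm_length w)%N.

Definition bruhat_le (n : nat) (u w : 'S_n) : Prop :=
  clos_refl_trans _ (@bruhat_step n) u w.

(* simple reflection s_{i+1} = (i+1, i+2), coded on 'I_n *)
Definition sref (n i : nat) : 'S_n :=
  match n return 'S_n with
  | 0 => 1%g
  | n'.+1 => tperm (inord i : 'I_n'.+1) (inord i.+1)
  end.

(* c = s_{n-1} s_{n-2} ... s_1 as a composition of functions.  In mathcomp
   (s * t) x = t (s x), so this is the product s_1 * s_2 * ... * s_{n-1}. *)
Definition coxc (n : nat) : 'S_n := (\prod_(i < n.-1) sref n i)%g.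

(* Main.v *)
Require Import Defs.
From mathcomp Require Import all_boot all_order all_algebra all_fingroup.
From mathcomp Require Import mpoly zify.
From Stdlib Require Import Relation_Operators.
Set Implicit Arguments.
Unset Strict Implicit.
Unset Printing Implicit Defensive.
Import GRing.Theory.
Local Open Scope ring_scope.

Section Ideal.
Variable R : comNzRingType.
Implicit Types S T : R -> Prop.

Lemma ideal0 S : ideal_gen S 0.
Proof. by exists [::], [::]; split => //; rewrite big_ord0. Qed.

Lemma idealD S f g : ideal_gen S f -> ideal_gen S g -> ideal_gen S (f + g).
Proof.
move=> [gs1 [cs1 [e1 h1 ->]]] [gs2 [cs2 [e2 h2 ->]]].
exists (gs1 ++ gs2), (cs1 ++ cs2); split.
- by rewrite !size_cat e1 e2.
- by move=> x; rewrite mem_cat => /orP [] ?; [apply: h1|apply: h2].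
rewrite size_cat big_split_ord /=; congr (_ + _); apply: eq_bigr => i _.
  by rewrite !nth_cat e1 ltn_ord.
by rewrite !nth_cat e1 ltnNge leq_addr /= addKn.
Qed.

Lemma idealM S c f : ideal_gen S f -> ideal_gen S (c * f).
Proof.
move=> [gs [cs [e h ->]]]; exists gs, (map (fun x => c * x) cs); split => //.
  by rewrite size_map.
rewrite big_distrr /=; apply: eq_bigr => i _.
by rewrite (nth_map 0) ?mulrA // e.
Qed.

Lemma idealN S f : ideal_gen S f -> ideal_gen S (- f).
Proof. by move=> h; rewrite -mulN1r; apply: idealM. Qed.

Lemma idealB S f g : ideal_gen S f -> ideal_gen S g -> ideal_gen S (f - g).
Proof. by move=> ? ?; apply: idealD => //; apply: idealN. Qed.

Lemma ideal_gen1 S g : S g -> ideal_gen S g.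
Proof.
move=> h; exists [:: g], [:: 1]; split => //; first by move=> x; rewrite inE => /eqP ->.
by rewrite big_ord1 mul1r.
Qed.

Lemma ideal_sum S (I : Type) (r : seq I) (P : pred I) (F : I -> R) :
  (forall i, P i -> ideal_gen S (F i)) -> ideal_gen S (\sum_(i <- r | P i) F i).
Proof.
move=> h; apply: (big_ind (ideal_gen S)); [exact: ideal0| exact: idealD|exact: h].
Qed.

Lemma ideal_mono S T f : (forall g, S g -> ideal_gen T g) -> ideal_gen S f -> ideal_gen T f.
Proof.
move=> hST [gs [cs [e h ->]]]; apply: ideal_sum => i _.
by apply: idealM; apply: hST; apply: h; apply: mem_nth.
Qed.
End Ideal.
Section Hom.
Variable k : nat.
Variable wt : 'X_{1..k} -> nat.
Hypothesis wtD : forall m1 m2, wt (m1 + m2)%MM = (wt m1 + wt m2)%N.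
Local Notation P := {mpoly CC[k]}.

Lemma coef_filtsum (s : seq 'X_{1..k}) (Q : pred 'X_{1..k}) (a : 'X_{1..k} -> CC) m0 :
  uniq s ->
  (\sum_(m <- s | Q m) a m *: ('X_[m] : P))@_m0 = if (m0 \in s) && Q m0 then a m0 else 0.
Proof.
elim: s => [|x s IH] /=; first by rewrite big_nil mcoeff0.
move=> /andP [xs us]; rewrite big_cons; case: ifP => Qx.
  rewrite mcoeffD mcoeffZ mcoeffX IH // inE.
  case: (eqVneq x m0) => [<-|ne]; first by rewrite (negbTE xs) /= Qx mulr1 addr0.
  by rewrite mulr0 add0r; case: ifP => // _; rewrite (negbTE ne).
rewrite IH // inE; case: (eqVneq m0 x) => [->|]; last by [].
by rewrite (negbTE xs) Qx.
Qed.

Lemma mcoeff_sumL (I : Type) (r : seq I) (Q : pred I) (F : I -> P) m :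
  (\sum_(i <- r | Q i) F i)@_m = \sum_(i <- r | Q i) (F i)@_m.
Proof.
elim: r => [|x r IH]; rewrite ?big_nil ?mcoeff0 // !big_cons.
by case: ifP => _; rewrite ?mcoeffD IH.
Qed.

Definition comp (d : nat) (f : P) : P :=
  \sum_(m <- msupp f | wt m == d) f@_m *: 'X_[m].

Lemma comp_coef d f m : (comp d f)@_m = if wt m == d then f@_m else 0.
Proof.
rewrite coef_filtsum ?msupp_uniq // mcoeff_msupp.
by case: (wt m == d); rewrite ?andbT ?andbF //; case: eqP.
Qed.

Definition Hom (d : nat) (h : P) := forall m, m \in msupp h -> wt m = d.

Lemma Hom0 d : Hom d 0.
Proof. by move=> m; rewrite msupp0. Qed.

Lemma HomD d a b : Hom d a -> Hom d b -> Hom d (a + b).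
Proof. by move=> ha hb m /msuppD_le; rewrite mem_cat => /orP [/ha|/hb]. Qed.

Lemma HomZ d c a : Hom d a -> Hom d (c *: a).
Proof. by move=> ha m /msuppZ_le /ha. Qed.

Lemma HomN d a : Hom d a -> Hom d (- a).
Proof. by move=> ha m; rewrite (perm_mem (msuppN a)) => /ha. Qed.

Lemma HomX m : Hom (wt m) ('X_[m]).
Proof. by move=> m'; rewrite msuppX inE => /eqP ->. Qed.

Lemma HomM d1 d2 a b : Hom d1 a -> Hom d2 b -> Hom (d1 + d2) (a * b).
Proof.
move=> ha hb m /msuppM_le /allpairsP [[m1 m2] /= [h1 h2 ->]].
by rewrite wtD (ha _ h1) (hb _ h2).
Qed.

Lemma Hom_comp d f : Hom d (comp d f).
Proof. by move=> m; rewrite mcoeff_msupp comp_coef; case: (wt m =P d) => [h _|_] //; by rewrite eqxx. Qed.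

Lemma comp_Hom d d' h : Hom d h -> comp d' h = if d == d' then h else 0.
Proof.
move=> hh; apply/mpolyP => m; rewrite comp_coef.
case: (boolP (m \in msupp h)) => [mh|]; last first.
  by rewrite -mcoeff_eq0 => /eqP h0; case: (wt m == d'); case: (d == d'); rewrite ?mcoeff0 ?h0.
by rewrite (hh _ mh); case: (d == d'); rewrite ?mcoeff0.
Qed.

Lemma compD d a b : comp d (a + b) = comp d a + comp d b.
Proof. by apply/mpolyP => m; rewrite mcoeffD !comp_coef mcoeffD; case: ifP; rewrite ?addr0. Qed.

Lemma comp_sum d (I : Type) (r : seq I) (Q : pred I) (F : I -> P) :
  comp d (\sum_(i <- r | Q i) F i) = \sum_(i <- r | Q i) comp d (F i).
Proof.
elim: r => [|x r IH]; rewrite ?big_nil ?big_cons.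
  by apply/mpolyP => m; rewrite comp_coef mcoeff0; case: ifP.
by case: ifP => _; rewrite ?compD IH.
Qed.

Definition wbound (f : P) : nat := (\max_(m <- msupp f) wt m).+1.

Lemma wbound_lt f m : m \in msupp f -> (wt m < wbound f)%N.
Proof. by move=> h; rewrite ltnS; apply: (bigmax_sup_seq _ h). Qed.

Lemma filt_sum_comp (q : pred nat) (f : P) :
  \sum_(m <- msupp f | q (wt m)) f@_m *: 'X_[m] = \sum_(d < wbound f | q d) comp d f.
Proof.
apply/mpolyP => m; rewrite coef_filtsum ?msupp_uniq // mcoeff_sumL.
case: (boolP (m \in msupp f)) => [mf|]; last first.
  rewrite -mcoeff_eq0 => /eqP h0; rewrite big1 ?if_same // => i _.
  by rewrite comp_coef h0 if_same.
case: ifP => [/andP [_ qm]|hn]; last first.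
  have qm : ~~ q (wt m).
    by move/negbT: hn; rewrite negb_and => /orP [/negP []|].
  rewrite big1 // => i qi; rewrite comp_coef; case: eqP => // e.
  by move: qm; rewrite e qi.
rewrite (bigD1 (Ordinal (wbound_lt mf))) // comp_coef eqxx big1 => [|i /andP [_ ne]].
  by rewrite [X in _ = X]addr0.
rewrite comp_coef; case: eqP => // e; case/eqP: ne; exact: val_inj.
Qed.

Lemma sum_comp (f : P) : f = \sum_(d < wbound f) comp d f.
Proof.
have := filt_sum_comp (fun _ => true) f; by rewrite -mpolyE => <-.
Qed.

Section IdealHom.
Variable S : P -> Prop.
Definition Sh (h : P) := (exists d, Hom d h) /\ ideal_gen S h.

Lemma ideal_comp_Sh f d : ideal_gen Sh f -> ideal_gen Sh (comp d f).
Proof.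
move=> [gs [cs [e hS ->]]]; rewrite comp_sum; apply: ideal_sum => i _.
have [[e' he'] _] := hS _ (mem_nth 0 (ltn_ord i)).
rewrite [X in comp _ (X * _)]sum_comp big_distrl comp_sum.
apply: ideal_sum => j _; rewrite (comp_Hom _ (HomM (@Hom_comp j _) he')).
case: ifP => _; last exact: ideal0.
by apply: idealM; apply: ideal_gen1; apply: hS; apply: mem_nth.
Qed.

Lemma ideal_hom : (forall g, S g -> ideal_gen Sh g) ->
  forall f, ideal_gen S f -> forall d, ideal_gen S (comp d f).
Proof.
move=> hS f hf d.
have : ideal_gen Sh (comp d f) by apply: ideal_comp_Sh; apply: ideal_mono hf.
by apply: ideal_mono => g [].
Qed.

Definition inw (f : P) : P :=
  \sum_(m <- msupp f | all (fun m' => wt m <= wt m')%N (msupp f)) f@_m *: 'X_[m].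

Lemma inw_Hom e h : Hom e h -> inw h = h.
Proof.
move=> hh; apply/mpolyP => m; rewrite coef_filtsum ?msupp_uniq //.
case: (boolP (m \in msupp h)) => [mh|]; last by rewrite -mcoeff_eq0 => /eqP ->.
have -> : all (fun m' => wt m <= wt m')%N (msupp h).
  by apply/allP => m' /hh ->; rewrite (hh _ mh).
by [].
Qed.

Lemma ideal_initial_iff (hh : forall f, ideal_gen S f -> forall d, ideal_gen S (comp d f)) f :
  ideal_gen S f <-> ideal_gen (fun g => exists f, ideal_gen S f /\ g = inw f) f.
Proof.
split.
- move=> hf; rewrite (sum_comp f); apply: ideal_sum => d _.
  apply: ideal_gen1; exists (comp d f); split; first exact: hh.
  by rewrite (inw_Hom (@Hom_comp d _)).
- apply: ideal_mono => g [f' [hf' ->]].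
  rewrite /inw (@filt_sum_comp (fun x => all (fun m' => x <= wt m')%N (msupp f'))).
  by apply: ideal_sum => d _; apply: hh.
Qed.
End IdealHom.
End Hom.

Local Close Scope ring_scope.

Lemma tpermE (T : finType) (x y z : T) :
  tperm x y z = if z == x then y else if z == y then x else z.
Proof.
case: tpermP => [->|->|/eqP/negbTE-> /eqP/negbTE->]; rewrite ?eqxx //.
by case: eqP => [->|].
Qed.

Definition Pc (n : nat) (u : 'S_n) := forall p : 'I_n, (p <= (u p).+1)%N.

Lemma len_swap n (u : 'S_n) (q p : 'I_n) : (q < p)%N -> (u p < u q)%N ->
  (perm_length (u * tperm (u q) (u p))%g <= perm_length u)%N.
Proof.
move=> qp upq; set w := (u * tperm (u q) (u p))%g.
pose tau := tperm q p.
have wE z : w z = u (tau z).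
  rewrite /w permM /tau !tpermE (inj_eq perm_inj) [u z == u p](inj_eq perm_inj).
  by case: (z == q); case: (z == p).
pose phi (xy : 'I_n * 'I_n) :=
  if (tau xy.1 < tau xy.2)%N then (tau xy.1, tau xy.2) else xy.
rewrite /perm_length.
set A := [set _ | _ ]; set B := [set _ | _].
rewrite -(card_in_imset (f := phi)).
  apply: subset_leq_card; apply/subsetP => z /imsetP [[x y]].
  rewrite !inE /= => /andP [xy wyx] ->; rewrite !wE in wyx.
  rewrite /phi /=; case: ifP => [-> //| ntau]; rewrite xy /=.
  move: xy ntau wyx; rewrite /tau !tpermE.
  case: (eqVneq x q) => [->|xq].
    rewrite ?eqxx; case: (eqVneq y q) => [->|yq]; first by rewrite ltnn.
    rewrite ?(negbTE yq); case: (eqVneq y p) => [->|yp].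
      by rewrite ?eqxx => _ _ /(ltn_trans upq); rewrite ltnn.
    rewrite ?(negbTE yp) => _ h1 h2; exact: ltn_trans h2 upq.
  rewrite ?(negbTE xq); case: (eqVneq x p) => [->|xp].
    rewrite ?eqxx; case: (eqVneq y q) => [->|yq]; first by move=> h; move: (ltn_trans qp h); rewrite ltnn.
    rewrite ?(negbTE yq); case: (eqVneq y p) => [->|yp]; first by rewrite ltnn.
    rewrite ?(negbTE yp) => h1 h2; move: (ltn_trans qp h1) => h3.
    by rewrite h3 in h2.
  rewrite ?(negbTE xp); case: (eqVneq y q) => [->|yq].
    rewrite ?eqxx => h1 h2; by rewrite (ltn_trans h1 qp) in h2.
  rewrite ?(negbTE yq); case: (eqVneq y p) => [->|yp]; last by rewrite ?(negbTE yp) => ->.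
  rewrite ?eqxx => _ _ h; exact: ltn_trans upq h.
move=> [x1 y1] [x2 y2] h1 h2; rewrite !inE /= in h1 h2.
case/andP: h1 => xy1 _; case/andP: h2 => xy2 _.
rewrite /phi /=.
have tauK z : tau (tau z) = z by rewrite tpermK.
case: ifP => t1; case: ifP => t2 [e1 e2].
- by rewrite -[x1]tauK e1 tauK -[y1]tauK e2 tauK.
- by move: t2; rewrite -e1 -e2 !tauK xy1.
- by move: t1; rewrite e1 e2 !tauK xy2.
- by rewrite e1 e2.
Qed.

Lemma Pc_step n (u w : 'S_n) : bruhat_step u w -> Pc w -> Pc u.
Proof.
move=> [i [j [ij [-> lt]]]] Pw p.
have key : forall a b : 'I_n, a != b -> (u * tperm a b)%g = (u * tperm b a)%g.
  by move=> a b _; rewrite tpermC.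
have claim : forall a b : 'I_n, (perm_length u < perm_length (u * tperm a b))%N ->
   Pc (u * tperm a b)%g -> u p = a -> (p <= a.+1)%N.
  move=> a b lt' Pw' upa.
  have wp := Pw' p; rewrite permM upa tpermL in wp.
  set q := (u^-1)%g b.
  have uq : u q = b by rewrite /q permKV.
  have wq := Pw' q; rewrite permM uq tpermR in wq.
  case: (leqP b a) => [ba|ab]; first by apply: leq_trans wp _; rewrite ltnS.
  case: (leqP p q) => [pq|qp]; first by apply: leq_trans pq wq.
  exfalso; have := len_swap (u:=u) qp; rewrite uq upa => /(_ ab).
  by rewrite tpermC leqNgt lt'.
case: (eqVneq (u p) i) => [upi|upi]; first by rewrite upi; exact: claim lt Pw upi.
case: (eqVneq (u p) j) => [upj|upj].
  rewrite upj; apply: (claim j i) => //; first by rewrite tpermC.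
  by move: Pw; rewrite tpermC.
have := Pw p; rewrite permM tpermD // eq_sym //.
Qed.

Lemma Pc_bruhat n (u w : 'S_n) : bruhat_le u w -> Pc w -> Pc u.
Proof.
elim=> [x y /Pc_step //| x //| x y z _ IH1 _ IH2 Pz]; exact: IH1 (IH2 Pz).
Qed.

Lemma coxc_val m (j : nat) (p : 'I_m.+1) : (j <= m)%N ->
  ((\prod_(i < j) sref m.+1 i)%g p : nat) =
  (if p == 0 :> nat then j else if (p <= j)%N then p.-1 else p).
Proof.
elim: j => [|j IH] hj.
  by rewrite big_ord0 perm1; case: (p : nat).
rewrite big_ord_recr /= permM.
set x := (\prod_(i < j) sref m.+1 i)%g p.
have hx : (x : nat) = _ := IH (ltnW hj).
rewrite tpermE.
have e1 : (x == inord j) = (x == j :> nat).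
  by rewrite -(inj_eq val_inj) /= inordK // ltnW.
have e2 : (x == inord j.+1) = (x == j.+1 :> nat).
  by rewrite -(inj_eq val_inj) /= inordK.
rewrite e1 e2 !(fun_if (@nat_of_ord _)) !inordK ?(ltnW hj) //; last by lia.
move: (nat_of_ord x) hx => X ->.
case: (p : nat) => [|q] /=; first by repeat case: ifP => ?; lia.
case h: (q < j) => /=; repeat case: ifP => ?; lia.
Qed.

Lemma Pc_coxc n : (2 <= n)%N -> Pc (coxc n).
Proof.
case: n => [//|m] _ p; rewrite /coxc /= coxc_val //.
by repeat case: ifP => ?; lia.
Qed.

Lemma all2_nth (r : rel nat) (s t : seq nat) i :
  all2 r s t -> (i < size s)%N -> r (nth 0%N s i) (nth 0%N t i).
Proof.
elim: s t i => [|x s IH] [|y t] [|i] //= /andP [h1 h2]; rewrite ?ltnS => hi //.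
exact: IH.
Qed.

Lemma sorted_ge (s : seq nat) r : sorted ltn s -> (r < size s)%N -> (r <= nth 0%N s r)%N.
Proof.
move=> ss; elim: r => [|r IH] hr //.
have := @sorted_ltn_nth _ ltn ltn_trans 0%N s ss r r.+1; rewrite !inE => h.
by apply: leq_ltn_trans (IH (ltnW hr)) (h (ltnW hr) hr (ltnSn r)).
Qed.

Lemma sorted_le (s : seq nat) m r : sorted ltn s -> (forall a, (a < m)%N -> a \in s) ->
  (r < m)%N -> (nth 0%N s r <= r)%N.
Proof.
move=> ss hs rm; rewrite leqNgt; apply/negP => hlt.
have us : uniq s by move: ss; rewrite ltn_sorted_uniq_leq => /andP [].
have sub : {subset iota 0 r.+1 <= take r s}.
  move=> a; rewrite mem_iota add0n ltnS => /andP [_ ar].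
  have ains : a \in s by apply: hs; apply: leq_ltn_trans ar rm.
  set j := index a s.
  have js : (j < size s)%N by rewrite index_mem.
  have nj : nth 0%N s j = a by rewrite nth_index.
  have rs : (r < size s)%N.
    by rewrite ltnNge; apply/negP => h; move: hlt; rewrite nth_default.
  case: (ltngtP j r) => [jr|rj|jr].
  - rewrite -nj -(nth_take 0%N jr); apply: mem_nth; rewrite size_take.
    by case: ifP.
  - have := @sorted_ltn_nth _ ltn ltn_trans 0%N s ss r j; rewrite !inE => /(_ rs js rj).
    by rewrite nj; lia.
  - by move: hlt; rewrite -jr nj; lia.
have := uniq_leq_size (iota_uniq 0 r.+1) sub; rewrite size_iota size_take.
by case: ifP => ?; lia.
Qed.

Definition sset n (I : {set 'I_n}) : seq nat := sort leq [seq val a | a in I].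

Lemma sset_sorted n (I : {set 'I_n}) : sorted ltn (sset I).
Proof.
rewrite ltn_sorted_uniq_leq sort_uniq (sort_sorted leq_total) andbT.
by rewrite map_inj_uniq ?enum_uniq //; exact: val_inj.
Qed.

Lemma mem_sset n (I : {set 'I_n}) (a : 'I_n) : (val a \in sset I) = (a \in I).
Proof.
rewrite /sset mem_sort (mem_map val_inj) mem_enum //.
Qed.

Lemma size_sset n (I : {set 'I_n}) : size (sset I) = #|I|.
Proof. by rewrite size_sort size_map cardE. Qed.

Lemma low_sub n (I K : {set 'I_n}) : gale_le I K ->
  (forall a : 'I_n, (a.+2 <= #|K|)%N -> a \in K) ->
  forall a : 'I_n, (a.+2 <= #|I|)%N -> a \in I.
Proof.
move=> /andP [/eqP eIK hall] hK a ha.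
have hsK : forall b, (b < #|K|.-1)%N -> b \in sset K.
  move=> b hb.
  have bn : (b < n)%N.
    by have := max_card K; rewrite card_ord; lia.
  rewrite -[b]/(val (Ordinal bn)) mem_sset; apply: hK => /=; move: hb; case: (#|K|) => [|k] //=.
have aI : (a < #|I|)%N by lia.
have aK : (a < #|K|.-1)%N by move: ha; rewrite eIK; case: (#|K|).
have h1 := sorted_le (sset_sorted K) hsK aK.
have h2 : (nth 0%N (sset I) a <= nth 0%N (sset K) a)%N.
  by apply: all2_nth hall _; rewrite size_sset.
have h3 : (a <= nth 0%N (sset I) a)%N by apply: sorted_ge (sset_sorted I) _; rewrite size_sset.
have e : nth 0%N (sset I) a = a by lia.
by rewrite -mem_sset /= -e; apply: mem_nth; rewrite size_sset.
Qed.


Lemma card_lt n t : (t <= n)%N -> #|[set a : 'I_n | (a < t)%N]| = t.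
Proof.
move=> tn.
have -> : [set a : 'I_n | (a < t)%N] = widen_ord tn @: [set: 'I_t].
  apply/setP => a; rewrite inE; apply/idP/imsetP => [at_|[b _ ->]] /=.
    by exists (Ordinal at_); rewrite ?inE //; apply: ord_inj.
  exact: ltn_ord.
rewrite card_imset ?cardsT ?card_ord //.
by move=> a b /(congr1 val) /= /ord_inj.
Qed.

Lemma vfirst_low n (v : 'S_n) s : Pc v -> forall a : 'I_n, (a.+2 <= s)%N -> a \in vfirst v s.
Proof.
move=> hv a ha; apply/imsetP; exists ((v^-1)%g a); last by rewrite permKV.
rewrite inE; have := hv ((v^-1)%g a); rewrite permKV; lia.
Qed.

Lemma wI_alive n (v : 'S_n) (x : PI n) (top : 'I_n) : val top = n.-1 -> Pc v ->
  gale_le (val x) (vfirst v #|val x|) -> wI x = (top \notin val x) :> nat.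
Proof.
move=> htop hv hg.
rewrite /wI; set I := val x; set s := #|I|.
have /andP [s0 sn] : (0 < s)%N && (s < n)%N := valP x.
have low : forall a : 'I_n, (a.+2 <= s)%N -> a \in I.
  have /andP [/eqP hc _] := hg.
  apply: (low_sub hg) => a; rewrite -hc; exact: vfirst_low.
set Low := [set a : 'I_n | (a.+2 <= s)%N].
have cardLow : #|Low| = s.-1.
  have -> : Low = [set a : 'I_n | (a < s.-1)%N] by apply/setP => a; rewrite !inE; lia.
  by rewrite card_lt //; lia.
have LowI : Low \subset I by apply/subsetP => a; rewrite inE; exact: low.
have -> : [set a in I | (s <= (val a).+1 <= n.-1)%N] = (I :\: Low) :\ top.
  apply/setP => a; rewrite !inE.
  have -> : (a != top) = (val a != n.-1) by rewrite -htop (inj_eq val_inj).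
  have := ltn_ord a.
  by case: (a \in I) => /=; rewrite ?andbF //; move=> ?; apply/idP/idP; lia.
have := cardsD1 top (I :\: Low).
rewrite [#|I :\: Low|]cardsD (setIidPr LowI) cardLow inE.
have -> : (top \in Low) = false by rewrite inE htop; lia.
have e1 : (#|I| - s.-1 = 1)%N by rewrite /s; lia.
rewrite e1; case: (top \in I); rewrite [~~ false && _]/= => h.
  by move: h; rewrite add1n => -[<-].
by move: h; rewrite add0n => <-.
Qed.

Lemma perm_JL (J L rs : seq nat) k : uniq rs -> all (fun r => r < size L)%N rs ->
  size rs = k -> (k <= size J)%N ->
  perm_eq (Jprime k J L rs ++ Lprime J L rs) (J ++ L).
Proof.
move=> urs ars srs hk.
set d := size L.
set M1 := map (nth 0%N L) rs.
set F := filter (predC (mem rs)) (iota 0 d).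
set M2 := map (nth 0%N L) F.
have p1 : perm_eq (iota 0 d) (rs ++ F).
  rewrite -(perm_filterC (mem rs) (iota 0 d)).
  apply: perm_cat (perm_refl _); apply: uniq_perm => //; first exact/filter_uniq/iota_uniq.
  move=> x; rewrite mem_filter mem_iota /=; apply/andP/idP => [[]//|xr]; split=> //.
  by have := allP ars x xr; rewrite add0n.
have hJ : Jprime k J L rs = M1 ++ drop k J.
  rewrite /Jprime -(subnKC hk) iotaD map_cat add0n; congr (_ ++ _).
    rewrite /M1 -{2}(mkseq_nth 0%N rs) /mkseq -map_comp srs.
    by apply/eq_in_map => t; rewrite mem_iota => /andP [_ tk] /=; rewrite tk.
  rewrite -[RHS](@take_oversize _ (size J - k)); last by rewrite size_drop.
  rewrite -(map_nth_iota 0%N) //; apply/eq_in_map => t.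
  by rewrite mem_iota => /andP [kt _]; rewrite ltnNge kt.
have hL : perm_eq (Lprime J L rs) (take k J ++ M2).
  rewrite /Lprime; set h := fun s => _.
  apply: (perm_trans (perm_map h p1)); rewrite map_cat; apply: perm_cat.
    have -> : map h rs = map (fun s => nth 0%N J (index s rs)) rs.
      by apply/eq_in_map => s sr; rewrite /h sr.
    have e : rs = map (nth 0%N rs) (iota 0 k) by rewrite -srs; exact: (esym (mkseq_nth 0%N rs)).
    rewrite [X in map _ X]e -map_comp -(map_nth_iota0 0%N) //.
    apply/seq.permP => a; congr (count a _); apply/eq_in_map => i; rewrite mem_iota => /andP [_ ik] /=.
    by rewrite index_uniq // srs.
  rewrite /M2; apply/seq.permP => a; congr (count a _); apply/eq_in_map => s.
  by rewrite mem_filter => /andP [hs _]; rewrite /h ifF //; exact: negbTE hs.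
apply/seq.permP => a; rewrite !count_cat hJ count_cat (seq.permP hL) count_cat.
have -> : count a L = count a (M1 ++ M2).
  rewrite -{1}(mkseq_nth 0%N L) /mkseq -/d; apply/seq.permP.
  by rewrite /M1 /M2 -map_cat; exact: perm_map p1.
rewrite -{3}(cat_take_drop k J) !count_cat; lia.
Qed.

Local Open Scope ring_scope.
Lemma mweightD n (m1 m2 : 'X_{1..nvar n}) :
  Defs.mweight (m1 + m2)%MM = (Defs.mweight m1 + Defs.mweight m2)%N.
Proof.
by rewrite /Defs.mweight -big_split; apply: eq_bigr => i _; rewrite mnmDE mulnDl.
Qed.

Lemma mweightU n (i : 'I_(nvar n)) : Defs.mweight U_(i)%MM = wI (enum_val i).
Proof.
rewrite /Defs.mweight (bigD1 i) //= mnm1E eqxx mul1n big1 ?addn0 // => j ji.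
by rewrite mnm1E eq_sym (negbTE ji).
Qed.

Lemma mweight0 n : Defs.mweight (0%MM : 'X_{1..nvar n}) = 0%N.
Proof. by rewrite /Defs.mweight big1 // => i _; rewrite mnm0E. Qed.

Section Main.
Variable n : nat.
Variable v : 'S_n.
Hypothesis hv : Pc v.
Variable top : 'I_n.
Hypothesis htop : val top = n.-1.

Local Notation wt := (@Defs.mweight n).
Local Notation HomW := (@Hom (nvar n) (@Defs.mweight n)).
Local Notation S := (@schubert_gen n v).

Lemma Hom_sign k : HomW 0 ((-1) ^+ k : An n).
Proof.
have h1 : HomW 0 (1 : An n).
  by have := @HomX _ wt (0%MM : 'X_{1..nvar n}); rewrite mweight0 mpolyX0.
elim: k => [|k IH]; first by rewrite expr0.
rewrite exprS; have := HomM (@mweightD n) (HomN h1) IH.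
by rewrite mulNr mul1r.
Qed.

Lemma pseq_cases (A : seq nat) :
  pseq n A = 0 \/ exists (x : PI n) (c : An n),
    [/\ HomW 0 c, pseq n A = c * pvar x, val x = [set a : 'I_n | val a \in A] & uniq A].
Proof.
rewrite /pseq; case: ifP => [/andP [uA _]|]; last by left.
rewrite /pset; case: insubP => [x _ ex|_]; last by rewrite mulr0; left.
by right; exists x, ((-1) ^+ ninv A); split => //; exact: Hom_sign.
Qed.

Lemma wpvar (x : PI n) : HomW (wI x) (pvar x).
Proof. by have := @HomX _ wt U_(enum_rank x); rewrite mweightU enum_rankK. Qed.

Lemma term_lemma (A B : seq nat) :
  Sh (@Defs.mweight n) S (pseq n A * pseq n B) \/
  HomW (2 - count_mem n.-1 (A ++ B))%N (pseq n A * pseq n B).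
Proof.
case: (pseq_cases A) => [->|[x [c1 [h1 eA ex uA]]]]; first by rewrite mul0r; right; exact: Hom0.
case: (pseq_cases B) => [->|[y [c2 [h2 eB ey uB]]]]; first by rewrite mulr0; right; exact: Hom0.
rewrite eA eB.
have hT := HomM (@mweightD n) (HomM (@mweightD n) h1 (@wpvar x)) (HomM (@mweightD n) h2 (@wpvar y)).
case: (boolP (gale_le (val x) (vfirst v #|val x|))) => gx; last first.
  left; split; first by eexists; exact: hT.
  rewrite mulrC; apply: idealM; apply: idealM; apply: ideal_gen1.
  by right; exists x.
case: (boolP (gale_le (val y) (vfirst v #|val y|))) => gy; last first.
  left; split; first by eexists; exact: hT.
  apply: idealM; apply: idealM; apply: ideal_gen1.
  by right; exists y.
right; move: hT; rewrite (wI_alive htop hv gx) (wI_alive htop hv gy).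
rewrite count_cat !count_uniq_mem // ex ey !inE htop.
by case: (n.-1 \in A); case: (n.-1 \in B).
Qed.


Lemma incr_props d (R : {set 'I_d}) :
  [/\ uniq (incr_list R), all (fun r => r < d)%N (incr_list R) & size (incr_list R) = #|R|].
Proof.
rewrite /incr_list; split.
- by rewrite sort_uniq map_inj_uniq; [exact: enum_uniq | exact: val_inj].
- by apply/allP => r; rewrite mem_sort => /mapP [a _ ->]; exact: ltn_ord.
- by rewrite size_sort size_map cardE.
Qed.

Lemma gen_Sh g : S g -> ideal_gen (Sh (@Defs.mweight n) S) g.
Proof.
move=> hg; case: (hg) => [[J [L [k [uJ uL aJ aL [h1 h2 h3 h4 eg]]]]] | [x [gx ->]]]; last first.
  apply: ideal_gen1; split; first by exists (wI x); exact: (@wpvar x).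
  by apply: ideal_gen1; right; exists x.
set d0 := (2 - count_mem n.-1 (J ++ L))%N.
pose Q (t : An n) := exists K H, [/\ t = K + H, ideal_gen (Sh (@Defs.mweight n) S) K & HomW d0 H].
have Qt : forall t, Sh (@Defs.mweight n) S t \/ HomW d0 t -> Q t.
  move=> t [ht|ht].
    by exists t, 0; split; [rewrite addr0 | apply: ideal_gen1 | exact: Hom0].
  by exists 0, t; split; [rewrite add0r | apply: ideal0 | ].
have Q0 : Q 0 by apply: Qt; right; exact: Hom0.
have QD : forall a b, Q a -> Q b -> Q (a + b).
  move=> a b [K1 [H1 [-> hK1 hH1]]] [K2 [H2 [-> hK2 hH2]]].
  exists (K1 + K2), (H1 + H2); split; [by rewrite addrACA | exact: idealD | exact: HomD].
have QN : forall a, Q a -> Q (- a).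
  move=> a [K [H [-> hK hH]]]; exists (- K), (- H); split; [by rewrite opprD | exact: idealN | exact: HomN].
have Qg : Q g.
  rewrite eg /plucker_rel; apply: (QD); first by apply: Qt; exact: term_lemma.
  apply: (QN); apply: (big_ind Q Q0 QD) => R /eqP hR.
  have [ur ar sr] := incr_props R.
  apply: Qt; have := term_lemma (Jprime k J L (incr_list R)) (Lprime J L (incr_list R)).
  rewrite (seq.permP (perm_JL ur ar _ _) (pred1 n.-1)) //; first by rewrite sr hR.
  by case/andP: h4.
case: Qg => K [H [eKH hK hH]].
have hKS : ideal_gen S K by apply: ideal_mono hK => t [].
have hHS : ideal_gen S H.
  have -> : H = g - K by rewrite eKH addrC addKr.
  by apply: idealB => //; apply: ideal_gen1.
rewrite eKH; apply: idealD hK _; apply: ideal_gen1; split => //; by exists d0.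
Qed.

End Main.

Theorem proposition3p4 (n : nat) : (2 <= n)%N ->
  forall v : 'S_n, bruhat_le v (coxc n) ->
  forall f : An n, schubert_ideal v f <-> initial_ideal (schubert_ideal v) f.
Proof.
move=> hn v hb f.
have hv : Pc v := Pc_bruhat hb (Pc_coxc hn).
have n0 : (n.-1 < n)%N by lia.
have hh := ideal_hom (@mweightD n) (@gen_Sh n v hv (Ordinal n0) erefl).
exact (ideal_initial_iff hh f).
Qed.
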